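(* Let $M$ be an object of an abelian category $\mathcal A$. Then: (1) $M$ is (strongly) self-Rickart if and only if for every split fully invariant short exact sequence $0\to F\to M\to C\to 0$, $M$ is (strongly) self-$F$-split. (2) $M$ is dual (strongly) self-Rickart if and only if for every split fully invariant short exact sequence $0\to F\to M\to C\to 0$, $M$ is dual (strongly) self-$F$-split.
   Context: Convention: each statement containing parenthetical words holds in two versions: one obtained by deleting all parenthetical words and one obtained by keeping all of them. Let $\mathcal A$ be an abelian category. A morphism $s:X\to Y$ is a section if $ts=1_X$ for some $t$, and a retraction if $st=1_Y$ for some $t$. A monomorphism $i:K\to M$ is fully invariant if for every morphism $h:M\to M$ there is $\alpha:K\to K$ with $hi=i\alpha$; an epimorphism $d:M\to C$ is fully coinvariant if for every $h:M\to M$ there is $\beta:C\to C$ with $dh=\beta d$. A short exact sequence $0\to F\xrightarrow{i}M\xrightarrow{d}C\to 0$ is fully invariant if $i$ is fully invariant. $M$ is (strongly) self-$F$-split if for every morphism $g:M\to M$, $\ker(dg)$ is a (fully invariant) section; $M$ is dual (strongly) self-$F$-split if for every morphism $g:M\to M$, $\mathrm{coker}(gi)$ is a (fully coinvariant) retraction. $M$ is (strongly) self-Rickart if for every morphism $f:M\to M$, $\ker(f)$ is a (fully invariant) section, and dual (strongly) self-Rickart if for every $f:M\to M$, $\mathrm{coker}(f)$ is a (fully coinvariant) retraction. *)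

(* Defs.v *)
From HB Require Import structures.
From mathcomp Require Import all_boot all_algebra.
Set Implicit Arguments. Unset Strict Implicit. Unset Printing Implicit Defensive.
Import GRing.Theory.
Local Open Scope ring_scope.

Record PreAdd := {
  Ob : Type;
  Mor : Ob -> Ob -> zmodType;
  idm : forall A, Mor A A;
  comp : forall A B C, Mor B C -> Mor A B -> Mor A C;
  comp_id_l : forall A B (f : Mor A B), comp (idm B) f = f;
  comp_id_r : forall A B (f : Mor A B), comp f (idm A) = f;
  comp_assoc : forall A B C D (h : Mor C D) (g : Mor B C) (f : Mor A B),
      comp h (comp g f) = comp (comp h g) f;
  comp_addl : forall A B C (g g' : Mor B C) (f : Mor A B),
      comp (g + g') f = comp g f + comp g' f;
  comp_addr : forall A B C (g : Mor B C) (f f' : Mor A B),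
      comp g (f + f') = comp g f + comp g f'
}.
Arguments idm {p} A.
Arguments comp {p A B C}.

Notation "g \oc f" := (comp g f) (at level 40, left associativity).

Section Notions.
Variable C : PreAdd.

Definition mono {A B : Ob C} (f : Mor A B) : Prop :=
  forall X (g h : Mor X A), f \oc g = f \oc h -> g = h.
Definition epi {A B : Ob C} (f : Mor A B) : Prop :=
  forall X (g h : Mor B X), g \oc f = h \oc f -> g = h.

Definition is_kernel {K A B : Ob C} (k : Mor K A) (f : Mor A B) : Prop :=
  f \oc k = 0 /\
  forall X (x : Mor X A), f \oc x = 0 -> exists! y : Mor X K, k \oc y = x.

Definition is_cokernel {A B Q : Ob C} (q : Mor B Q) (f : Mor A B) : Prop :=
  q \oc f = 0 /\
  forall X (x : Mor B X), x \oc f = 0 -> exists! y : Mor Q X, y \oc q = x.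

Definition is_zero_object (Z : Ob C) : Prop :=
  forall X, (forall f g : Mor Z X, f = g) /\ (forall f g : Mor X Z, f = g).

Definition is_biproduct (A B P : Ob C) (p1 : Mor P A) (p2 : Mor P B)
  (i1 : Mor A P) (i2 : Mor B P) : Prop :=
  [/\ p1 \oc i1 = idm A, p2 \oc i2 = idm B, p1 \oc i2 = 0, p2 \oc i1 = 0
    & i1 \oc p1 + i2 \oc p2 = idm P].

Definition abelian : Prop :=
  (exists Z, is_zero_object Z) /\
  (forall A B, exists P (p1 : Mor P A) (p2 : Mor P B) i1 i2,
      is_biproduct p1 p2 i1 i2) /\
  (forall A B (f : Mor A B), exists K (k : Mor K A), is_kernel k f) /\
  (forall A B (f : Mor A B), exists Q (q : Mor B Q), is_cokernel q f) /\
  (forall A B (f : Mor A B), mono f -> exists Q (q : Mor B Q), is_kernel f q) /\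
  (forall A B (f : Mor A B), epi f -> exists K (k : Mor K A), is_cokernel f k).

Definition section {X Y : Ob C} (s : Mor X Y) : Prop :=
  exists t : Mor Y X, t \oc s = idm X.
Definition retraction {X Y : Ob C} (s : Mor X Y) : Prop :=
  exists t : Mor Y X, s \oc t = idm Y.

Definition fully_invariant {K M : Ob C} (i : Mor K M) : Prop :=
  mono i /\ forall h : Mor M M, exists a : Mor K K, h \oc i = i \oc a.
Definition fully_coinvariant {M Q : Ob C} (d : Mor M Q) : Prop :=
  epi d /\ forall h : Mor M M, exists b : Mor Q Q, d \oc h = b \oc d.

Definition short_exact {F M Q : Ob C} (i : Mor F M) (d : Mor M Q) : Prop :=
  mono i /\ epi d /\ is_kernel i d /\ is_cokernel d i.
Definition split_ses {F M Q : Ob C} (i : Mor F M) (d : Mor M Q) : Prop :=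
  short_exact i d /\ section i.
Definition fully_invariant_ses {F M Q : Ob C} (i : Mor F M) (d : Mor M Q) : Prop :=
  short_exact i d /\ fully_invariant i.

(* "ker f is a (fully invariant) section": every kernel of f is one
   (kernels exist and are unique up to iso in an abelian category). *)
Definition ker_section {A B : Ob C} (f : Mor A B) : Prop :=
  forall K (k : Mor K A), is_kernel k f -> section k.
Definition ker_fi_section {A B : Ob C} (f : Mor A B) : Prop :=
  forall K (k : Mor K A), is_kernel k f -> section k /\ fully_invariant k.
Definition coker_retraction {A B : Ob C} (f : Mor A B) : Prop :=
  forall Q (q : Mor B Q), is_cokernel q f -> retraction q.
Definition coker_fc_retraction {A B : Ob C} (f : Mor A B) : Prop :=
  forall Q (q : Mor B Q), is_cokernel q f -> retraction q /\ fully_coinvariant q.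

Definition self_Rickart (M : Ob C) : Prop :=
  forall f : Mor M M, ker_section f.
Definition strongly_self_Rickart (M : Ob C) : Prop :=
  forall f : Mor M M, ker_fi_section f.
Definition dual_self_Rickart (M : Ob C) : Prop :=
  forall f : Mor M M, coker_retraction f.
Definition dual_strongly_self_Rickart (M : Ob C) : Prop :=
  forall f : Mor M M, coker_fc_retraction f.

Definition self_F_split {F M Q : Ob C} (i : Mor F M) (d : Mor M Q) : Prop :=
  forall g : Mor M M, ker_section (d \oc g).
Definition strongly_self_F_split {F M Q : Ob C} (i : Mor F M) (d : Mor M Q) : Prop :=
  forall g : Mor M M, ker_fi_section (d \oc g).
Definition dual_self_F_split {F M Q : Ob C} (i : Mor F M) (d : Mor M Q) : Prop :=
  forall g : Mor M M, coker_retraction (g \oc i).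
Definition dual_strongly_self_F_split {F M Q : Ob C} (i : Mor F M) (d : Mor M Q) : Prop :=
  forall g : Mor M M, coker_fc_retraction (g \oc i).

End Notions.

(* Main.v *)
Require Import Defs.
From mathcomp Require Import all_boot all_algebra.
Import GRing.Theory.
Local Open Scope ring_scope.

Lemma comp0l (C : PreAdd) (A B D : Ob C) (f : Mor A B) :
  (0 : Mor B D) \oc f = 0.
Proof.
have h := comp_addl (0 : Mor B D) 0 f. rewrite addr0 in h.
apply: (@addrI _ (0 \oc f)). by rewrite -h addr0.
Qed.

Lemma compNl (C : PreAdd) (A B D : Ob C) (g : Mor B D) (f : Mor A B) :
  (- g) \oc f = - (g \oc f).
Proof.
apply/eqP; rewrite -subr_eq0 opprK -comp_addl addNr; apply/eqP; exact: comp0l.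
Qed.

Lemma ker_equiv (C : PreAdd) (K A B B' : Ob C) (k : Mor K A)
  (f : Mor A B) (f' : Mor A B') :
  (forall X (x : Mor X A), f \oc x = 0 <-> f' \oc x = 0) ->
  is_kernel k f -> is_kernel k f'.
Proof.
move=> E [h1 h2]; split; first by apply/E.
by move=> X x /E; apply: h2.
Qed.

Lemma coker_equiv (C : PreAdd) (Q A B B' : Ob C) (q : Mor B Q)
  (f : Mor A B) (f' : Mor B' B) :
  (forall X (x : Mor B X), x \oc f = 0 <-> x \oc f' = 0) ->
  is_cokernel q f -> is_cokernel q f'.
Proof.
move=> E [h1 h2]; split; first by apply/E.
by move=> X x /E; apply: h2.
Qed.

Lemma split_ker (C : PreAdd) (F M Q : Ob C) (i : Mor F M) (d : Mor M Q)
  (t : Mor M F) (g : Mor M M) :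
  is_kernel i d -> t \oc i = idm F ->
  forall X (x : Mor X M),
    ((idm M - i \oc t) \oc g) \oc x = 0 <-> (d \oc g) \oc x = 0.
Proof.
move=> [di ku] ti X x; rewrite -!comp_assoc; set y := g \oc x.
rewrite comp_addl compNl comp_id_l; split.
  move/eqP; rewrite subr_eq0 => /eqP E; rewrite E.
  by rewrite !comp_assoc di !comp0l.
move=> /ku [z [iz _]]; rewrite -iz !comp_assoc -(comp_assoc i) ti comp_id_r.
by rewrite subrr.
Qed.

Lemma split_coker (C : PreAdd) (F M : Ob C) (i : Mor F M)
  (t : Mor M F) (g : Mor M M) :
  t \oc i = idm F ->
  forall X (x : Mor M X),
    x \oc (g \oc (i \oc t)) = 0 <-> x \oc (g \oc i) = 0.
Proof.
move=> ti X x; split.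
  move=> h. have := f_equal (fun u => u \oc i) h.
  by rewrite comp0l -!comp_assoc ti comp_id_r !comp_assoc.
move=> h; by rewrite !comp_assoc -(comp_assoc x) h comp0l.
Qed.

Section Triv.
Variable C : PreAdd.
Variable Z : Ob C.
Hypothesis HZ : is_zero_object Z.

Lemma triv_ses1 (M : Ob C) :
  split_ses (0 : Mor Z M) (idm M) /\ fully_invariant_ses (0 : Mor Z M) (idm M).
Proof.
have mi : mono (0 : Mor Z M) by move=> X g h _; apply: (HZ X).2.
have se : short_exact (0 : Mor Z M) (idm M).
  split; first exact: mi.
  split; first by move=> X g h; rewrite !comp_id_r.
  split; split.
  - by rewrite comp_id_l.
  - move=> X x; rewrite comp_id_l => ->; exists 0; split; first exact: comp0l.
    by move=> y _; apply: (HZ X).2.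
  - by rewrite comp_id_l.
  - move=> X x _; exists x; split; first by rewrite comp_id_r.
    by move=> y; rewrite comp_id_r.
split; split => //.
  by exists 0; apply: (HZ Z).1.
split => // h; exists (idm Z); apply: (HZ M).1.
Qed.

Lemma triv_ses2 (M : Ob C) :
  split_ses (idm M) (0 : Mor M Z) /\ fully_invariant_ses (idm M) (0 : Mor M Z).
Proof.
have mi : mono (idm M) by move=> X g h; rewrite !comp_id_l.
have se : short_exact (idm M) (0 : Mor M Z).
  split; first exact: mi.
  split; first by move=> X g h _; apply: (HZ X).1.
  split; split.
  - by rewrite comp_id_r.
  - move=> X x _; exists x; split; first by rewrite comp_id_l.
    by move=> y; rewrite comp_id_l.
  - by rewrite comp_id_r.
  - move=> X x; rewrite comp_id_r => ->; exists 0; split; first exact: comp0l.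
    by move=> y _; apply: (HZ X).1.
split; split => //.
  by exists (idm M); rewrite comp_id_l.
split => // h; exists h; by rewrite comp_id_l comp_id_r.
Qed.
End Triv.

Theorem corollary4p4 (C : PreAdd) (HC : abelian C) (M : Ob C) :
  (self_Rickart M <->
     (forall (F Q : Ob C) (i : Mor F M) (d : Mor M Q),
        split_ses i d -> fully_invariant_ses i d -> self_F_split i d)) /\
  (strongly_self_Rickart M <->
     (forall (F Q : Ob C) (i : Mor F M) (d : Mor M Q),
        split_ses i d -> fully_invariant_ses i d -> strongly_self_F_split i d)) /\
  (dual_self_Rickart M <->
     (forall (F Q : Ob C) (i : Mor F M) (d : Mor M Q),
        split_ses i d -> fully_invariant_ses i d -> dual_self_F_split i d)) /\
  (dual_strongly_self_Rickart M <->
     (forall (F Q : Ob C) (i : Mor F M) (d : Mor M Q),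
        split_ses i d -> fully_invariant_ses i d -> dual_strongly_self_F_split i d)).
Proof.
have [Z HZ] := HC.1.
have [s1 f1] := @triv_ses1 C Z HZ M.
have [s2 f2] := @triv_ses2 C Z HZ M.
split; [|split; [|split]]; split.
- move=> H F Q i d [[_ [_ [ki _]]] [t ti]] _ g K k kk.
  apply: (H ((idm M - i \oc t) \oc g)).
  apply: ker_equiv kk => X x; apply: iff_sym; exact: split_ker.
- move=> H f K k kk; have := H _ _ _ _ s1 f1 f K k.
  by rewrite comp_id_l; apply.
- move=> H F Q i d [[_ [_ [ki _]]] [t ti]] _ g K k kk.
  apply: (H ((idm M - i \oc t) \oc g)).
  apply: ker_equiv kk => X x; apply: iff_sym; exact: split_ker.
- move=> H f K k kk; have := H _ _ _ _ s1 f1 f K k.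
  by rewrite comp_id_l; apply.
- move=> H F Q i d [_ [t ti]] _ g K k kk.
  apply: (H (g \oc (i \oc t))).
  apply: coker_equiv kk => X x; apply: iff_sym; exact: split_coker.
- move=> H f K k kk; have := H _ _ _ _ s2 f2 f K k.
  by rewrite comp_id_r; apply.
- move=> H F Q i d [_ [t ti]] _ g K k kk.
  apply: (H (g \oc (i \oc t))).
  apply: coker_equiv kk => X x; apply: iff_sym; exact: split_coker.
- move=> H f K k kk; have := H _ _ _ _ s2 f2 f K k.
  by rewrite comp_id_r; apply.
Qed.
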